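(* Let $p\in J$. The value of the linear program (LP): maximize $\pi_1(\Omega)$ over pairs $(\pi_1,\pi_2)\in\mathrm{cone}(\mathcal{E})\times\mathrm{cone}(\Omega^-)$ with $\pi_1+\pi_2=p$, equals the value of the program (LP'): maximize $\pi(\Omega)$ over $\pi\in\mathrm{cone}(\Omega)$ with $\pi\le p$ (coordinatewise) and $\sum_{\omega\in\Omega}\pi(\omega)r(\omega)\ge0$.
   Context: $\Omega$ is a finite set, $r:\Omega\to\mathbb{R}$; each $\omega$ is identified with a unit vector of $\mathbb{R}^\Omega$ and $\Delta(\Omega)$ with the unit simplex. $J=\{p\in\Delta(\Omega):\sum_\omega p(\omega)r(\omega)<0\}$, $\mathcal{F}=\{p\in\Delta(\Omega):\sum_\omega p(\omega)r(\omega)=0\}$, $\mathcal{E}$ is the set of extreme points of $\mathcal{F}$, $\Omega^-=\{\omega:r(\omega)<0\}$. For a finite set $A\subset\mathbb{R}^\Omega$, $\mathrm{cone}(A)$ is the closed convex hull of $A\cup\{0\}$; for $\pi\in\mathbb{R}^\Omega$, $\pi(\Omega)=\sum_\omega\pi(\omega)$. *)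

(* Defs.v *)
From mathcomp Require Import all_boot all_order all_algebra.
Set Implicit Arguments. Unset Strict Implicit. Unset Printing Implicit Defensive.
Import Order.TTheory GRing.Theory Num.Theory.
Local Open Scope ring_scope.

Section Defs.
Variables (R : realFieldType) (Omega : finType).

Definition unitv (w : Omega) : Omega -> R := fun w' => if w' == w then 1 else 0.

Definition mass (p : Omega -> R) : R := \sum_w p w.

Definition expect (r : Omega -> R) (p : Omega -> R) : R := \sum_w p w * r w.

Definition in_simplex (p : Omega -> R) : Prop :=
  (forall w, 0 <= p w) /\ mass p = 1.

Definition inJ (r : Omega -> R) (p : Omega -> R) : Prop :=
  in_simplex p /\ expect r p < 0.

Definition inF (r : Omega -> R) (p : Omega -> R) : Prop :=
  in_simplex p /\ expect r p = 0.

Definition extreme_point (S : (Omega -> R) -> Prop) (p : Omega -> R) : Prop :=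
  S p /\ forall (q1 q2 : Omega -> R) (t : R), S q1 -> S q2 -> 0 < t < 1 ->
    (forall w, p w = t * q1 w + (1 - t) * q2 w) -> q1 = q2.

Definition inE (r : Omega -> R) (p : Omega -> R) : Prop := extreme_point (inF r) p.

(* cone(A) := convex hull of A u {0}: finite combinations with nonnegative
   coefficients of total weight <= 1. *)
Definition cone (A : (Omega -> R) -> Prop) (pi : Omega -> R) : Prop :=
  exists (n : nat) (a : 'I_n -> (Omega -> R)) (l : 'I_n -> R),
    (forall i, A (a i)) /\ (forall i, 0 <= l i) /\ \sum_i l i <= 1 /\
    forall w, pi w = \sum_i l i * a i w.

Definition OmegaV (v : Omega -> R) : Prop := exists w, v = unitv w.
Definition OmegaMinusV (r : Omega -> R) (v : Omega -> R) : Prop :=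
  exists w, r w < 0 /\ v = unitv w.

Definition is_max_value (P : R -> Prop) (v : R) : Prop :=
  P v /\ forall x, P x -> x <= v.

Definition LP_values (r p : Omega -> R) (x : R) : Prop :=
  exists pi1 pi2 : Omega -> R,
    cone (inE r) pi1 /\ cone (OmegaMinusV r) pi2 /\
    (forall w, pi1 w + pi2 w = p w) /\ x = mass pi1.

Definition LP'_values (r p : Omega -> R) (x : R) : Prop :=
  exists pi : Omega -> R,
    cone OmegaV pi /\ (forall w, pi w <= p w) /\ 0 <= expect r pi /\
    x = mass pi.

End Defs.

(* Main.v *)
Require Import Defs.
From mathcomp Require Import all_boot all_order all_algebra.
From mathcomp Require Import ring lra.
From Stdlib Require Import FunctionalExtensionality.
Import Order.TTheory GRing.Theory Num.Theory.
Local Open Scope ring_scope.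
Lemma sum_enum_nz (R : realFieldType) (I : finType) (l F : I -> R) :
  (forall i, l i = 0 -> F i = 0) ->
  \sum_(j < #|[pred i | l i != 0]|) F (enum_val j) = \sum_i F i.
Proof.
move=> hF; rewrite -(big_enum_val F) /= big_mkcond /=.
apply: eq_bigr => i _; rewrite inE; case: eqP => // /hF ->; by [].
Qed.

Lemma cone_fin (R : realFieldType) (Omega : finType) (A : (Omega -> R) -> Prop)
  (I : finType) (a : I -> Omega -> R) (l : I -> R) (pi : Omega -> R) :
  (forall i, l i != 0 -> A (a i)) -> (forall i, 0 <= l i) -> \sum_i l i <= 1 ->
  (forall w, pi w = \sum_i l i * a i w) -> cone A pi.
Proof.
move=> hA hl hs hpi.
exists #|[pred i | l i != 0]|, (fun j => a (enum_val j)), (fun j => l (enum_val j)).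
split; first by move=> j; apply: hA; have := enum_valP j; rewrite inE.
split; first by move=> j; apply: hl.
split; first by rewrite (@sum_enum_nz _ _ l l).
move=> w; rewrite hpi (@sum_enum_nz _ _ l (fun i => l i * a i w)) // => i ->.
by rewrite mul0r.
Qed.

Lemma cone_nonneg (R : realFieldType) (Omega : finType) (A : (Omega -> R) -> Prop) pi :
  (forall v, A v -> forall w, 0 <= v w) -> cone A pi -> forall w, 0 <= pi w.
Proof.
move=> hA [n [a [l [ha [hl [_ hpi]]]]]] w; rewrite hpi.
by apply: sumr_ge0 => i _; apply: mulr_ge0 => //; apply: hA.
Qed.

Lemma cone_expect0 (R : realFieldType) (Omega : finType) (A : (Omega -> R) -> Prop) r pi :
  (forall v, A v -> expect r v = 0) -> cone A pi -> expect r pi = 0.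
Proof.
move=> hA [n [a [l [ha [hl [_ hpi]]]]]]; rewrite /expect.
rewrite (eq_bigr (fun w => \sum_i l i * a i w * r w)); last first.
  by move=> w _; rewrite hpi mulr_suml.
rewrite exchange_big /=; apply: big1 => i _.
rewrite (eq_bigr (fun w => l i * (a i w * r w))); last by move=> w _; rewrite mulrA.
by rewrite -mulr_sumr; have := hA _ (ha i); rewrite /expect => ->; rewrite mulr0.
Qed.

Lemma cone_minus_zero (R : realFieldType) (Omega : finType) (r pi : Omega -> R) :
  cone (OmegaMinusV r) pi -> forall w, 0 <= r w -> pi w = 0.
Proof.
move=> [n [a [l [ha [hl [_ hpi]]]]]] w hw; rewrite hpi; apply: big1 => i _.
have [z [hz ->]] := ha i; rewrite /unitv; case: eqP => [e|_]; last by rewrite mulr0.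
by move: hz; rewrite -e ltNge hw.
Qed.

Lemma sum_unitv (R : realFieldType) (Omega : finType) (f : Omega -> R) w :
  \sum_i f i * unitv R i w = f w.
Proof.
rewrite (bigD1 w) //= /unitv eqxx mulr1 big1 ?addr0 // => i /negbTE.
by rewrite eq_sym => ->; rewrite mulr0.
Qed.

Lemma cone_Omega (R : realFieldType) (Omega : finType) (pi : Omega -> R) :
  (forall w, 0 <= pi w) -> mass pi <= 1 -> cone (@OmegaV R Omega) pi.
Proof.
move=> h0 h1; apply: (@cone_fin _ _ _ Omega (@unitv R Omega) pi) => //.
- by move=> i _; exists i.
- by move=> w; rewrite sum_unitv.
Qed.

Lemma inE_F (R : realFieldType) (Omega : finType) (r v : Omega -> R) :
  Defs.inE r v -> inF r v.
Proof. by case. Qed.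

Lemma LP_sub (R : realFieldType) (Omega : finType) (r p : Omega -> R) x :
  in_simplex p -> LP_values r p x -> LP'_values r p x.
Proof.
move=> [p0 p1] [pi1 [pi2 [c1 [c2 [hs ->]]]]].
have n1 : forall w, 0 <= pi1 w.
  apply: cone_nonneg c1 => v /inE_F [[hv _] _]; exact: hv.
have n2 : forall w, 0 <= pi2 w.
  apply: cone_nonneg c2 => v [z [_ ->]] w; rewrite /unitv; by case: eqP.
have le : forall w, pi1 w <= p w by move=> w; rewrite -hs lerDl.
exists pi1; split; last split=> //; last split=> //.
- apply: cone_Omega => //; rewrite -p1; exact: ler_sum.
- by rewrite (@cone_expect0 _ _ _ r pi1 _ c1) // => v /inE_F [_ ->].
Qed.
Definition Hs (R : realFieldType) (Omega : finType) (r p : Omega -> R) (s : R) :=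
  \sum_w (if - s <= r w then p w * r w else 0).
Definition Gs (R : realFieldType) (Omega : finType) (r p : Omega -> R) (s : R) :=
  \sum_w (if - s < r w then p w * r w else 0).

Arguments Hs {R Omega}. Arguments Gs {R Omega}.

Lemma exists_s (R : realFieldType) (Omega : finType) (r p : Omega -> R) :
  (forall w, 0 <= p w) -> expect r p < 0 ->
  exists s, 0 < s /\ 0 <= Gs r p s /\ Hs r p s <= 0.
Proof.
move=> p0 hneg.
have [w0 hw0] : exists w0, r w0 < 0.
  case: (pickP (fun w => r w < 0)) => [w hw|hn]; first by exists w.
  move: hneg; rewrite ltNge => /negP; case.
  by apply: sumr_ge0 => w _; apply: mulr_ge0 => //; rewrite leNgt hn.
case: (@arg_minP _ _ _ w0 predT r isT) => wm _ hm.
pose P := fun w => (r w < 0) && (Hs r p (- r w) <= 0).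
have Pwm : P wm.
  apply/andP; split; first by apply: le_lt_trans (hm w0 isT) hw0.
  rewrite /Hs (eq_bigr (fun w => p w * r w)); first exact: ltW.
  by move=> w _; rewrite opprK hm.
case: (@arg_maxP _ _ _ wm P r Pwm) => w1 /andP [hw1 hH1] hmax.
exists (- r w1); split; first by rewrite oppr_gt0.
split=> //.
rewrite leNgt; apply/negP => hG.
case: (pickP (fun w => (- - r w1 < r w) && (r w < 0))) => [w hw|hn].
- case: (@arg_minP _ _ _ w (fun w => (- - r w1 < r w) && (r w < 0)) r hw)
    => w2 /andP [h2a h2b] hmin2.
  have eqHG : Hs r p (- r w2) = Gs r p (- r w1).
    apply: eq_bigr => z _; rewrite opprK.
    have -> : (r w2 <= r z) = (- - r w1 < r z); last by [].
    apply/idP/idP => hz; first by apply: lt_le_trans hz.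
    case: (ltP (r z) 0) => hz0; first by apply: hmin2; rewrite hz hz0.
    by apply: le_trans (ltW h2b) hz0.
  have P2 : P w2 by rewrite /P h2b eqHG ltW.
  have h2 : r w2 <= r w1 := hmax w2 P2.
  move: h2; rewrite leNgt => /negP; apply.
  by move: h2a; rewrite opprK.
- move: hG; rewrite ltNge => /negP; apply.
  apply: sumr_ge0 => z _; case: ifP => // hz; apply: mulr_ge0 => //.
  by have := hn z; rewrite /= hz /= => /negbT; rewrite -leNgt.
Qed.

Lemma sum_unitv2 (R : realFieldType) (Omega : finType) (g : Omega -> R) a :
  \sum_w g w * unitv R a w = g a.
Proof.
rewrite (bigD1 a) //= /unitv eqxx mulr1 big1 ?addr0 // => i /negbTE ->.
by rewrite mulr0.
Qed.

Lemma sum_lin (R : realFieldType) (Omega : finType) (g : Omega -> R) a b al be ga :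
  \sum_w g w * ((al * unitv R a w + be * unitv R b w) * ga) = (al * g a + be * g b) * ga.
Proof.
rewrite (eq_bigr (fun w => (al * ga) * (g w * unitv R a w) + (be * ga) * (g w * unitv R b w))).
  by rewrite big_split /= -!mulr_sumr !sum_unitv2; ring.
by move=> w _; ring.
Qed.

Lemma extreme_from_support (R : realFieldType) (Omega : finType) (r e : Omega -> R) :
  inF r e ->
  (forall q1 q2, inF r q1 -> inF r q2 -> (forall w, e w = 0 -> q1 w = 0) ->
      (forall w, e w = 0 -> q2 w = 0) -> q1 = q2) ->
  Defs.inE r e.
Proof.
move=> hF hU; split=> // q1 q2 t h1 h2 /andP [t0 t1] he.
have [[n1 _] _] := h1; have [[n2 _] _] := h2.
apply: hU => // w /esym; rewrite he => h; have := n1 w; have := n2 w; nra.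
Qed.

Lemma unitv_F (R : realFieldType) (Omega : finType) (r : Omega -> R) z :
  r z = 0 -> inF r (unitv R z).
Proof.
move=> hz; split; first split.
- by move=> w; rewrite /unitv; case: eqP.
- by rewrite /mass (eq_bigr (fun w => 1 * unitv R z w)) ?sum_unitv2 // => w _; rewrite mul1r.
- rewrite /expect (eq_bigr (fun w => r w * unitv R z w)) ?sum_unitv2 // => w _.
  by rewrite mulrC.
Qed.

Lemma unitv_E (R : realFieldType) (Omega : finType) (r : Omega -> R) z :
  r z = 0 -> Defs.inE r (unitv R z).
Proof.
move=> hz; apply: extreme_from_support; first exact: unitv_F.
have key : forall q, inF r q -> (forall w, unitv R z w = 0 -> q w = 0) ->
    forall w, q w = unitv R z w.
  move=> q [[_ hm] _] hq.
  have pw : forall w, q w = q z * unitv R z w.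
    move=> w; rewrite /unitv; case: eqP => [->|/eqP ne]; first by rewrite mulr1.
    by rewrite mulr0 hq // /unitv (negbTE ne).
  have qz : q z = 1.
    by rewrite -hm /mass (eq_bigr (fun w => q z * unitv R z w)) ?sum_unitv2 // => w _; rewrite -pw.
  by move=> w; rewrite pw qz mul1r.
move=> q1 q2 h1 h2 s1 s2; apply: functional_extensionality => w.
by rewrite key // key.
Qed.

Definition e2 (R : realFieldType) (Omega : finType) (r : Omega -> R) a b : Omega -> R :=
  fun w => (- r b * unitv R a w + r a * unitv R b w) * (r a - r b)^-1.

Arguments e2 {R Omega}.

Lemma e2_E (R : realFieldType) (Omega : finType) (r : Omega -> R) a b :
  0 < r a -> r b < 0 -> Defs.inE r (e2 r a b).
Proof.
move=> ha hb.
have ab : a != b by apply/eqP => e; move: ha; rewrite e; lra.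
have d0 : 0 < r a - r b by lra.
have dn : r a - r b != 0 by rewrite gt_eqF.
apply: extreme_from_support.
  split; first split.
  - move=> w; rewrite /e2 /unitv; apply: mulr_ge0; last by rewrite invr_ge0 ltW.
    case: eqP; case: eqP => _ _; lra.
  - rewrite /mass (eq_bigr (fun w => 1 * e2 r a b w)) ?sum_lin; last by move=> w _; rewrite mul1r.
    by field.
  - rewrite /expect (eq_bigr (fun w => r w * e2 r a b w)) ?sum_lin; last by move=> w _; rewrite mulrC.
    by field.
have key : forall q, inF r q -> (forall w, e2 r a b w = 0 -> q w = 0) ->
    (forall w, q w = q a * unitv R a w + q b * unitv R b w) /\
    q a + q b = 1 /\ q a * r a + q b * r b = 0.
  move=> q [[_ hm] he] hq.
  have pw : forall w, q w = q a * unitv R a w + q b * unitv R b w.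
    move=> w; rewrite /unitv; case: eqP => [->|/eqP na].
      by rewrite (negbTE ab) mulr1 mulr0 addr0.
    case: eqP => [->|/eqP nb]; first by rewrite mulr0 mulr1 add0r.
    by rewrite !mulr0 addr0 hq // /e2 /unitv (negbTE na) (negbTE nb) !mulr0 addr0 mul0r.
  split=> //; split.
  - rewrite -hm /mass (eq_bigr (fun w => 1 * ((q a * unitv R a w + q b * unitv R b w) * 1))) .
      by rewrite sum_lin; ring.
    by move=> w _; rewrite pw; ring.
  - rewrite -he /expect (eq_bigr (fun w => r w * ((q a * unitv R a w + q b * unitv R b w) * 1))).
      by rewrite sum_lin; ring.
    by move=> w _; rewrite pw; ring.
move=> q1 q2 h1 h2 s1 s2.
have [p1 [m1 x1]] := key q1 h1 s1; have [p2 [m2 x2]] := key q2 h2 s2.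
have ea : q1 a = q2 a.
  apply: (mulIf dn).
  have e1 : q1 a * (r a - r b) = (q1 a * r a + q1 b * r b) - (q1 a + q1 b) * r b by ring.
  have e2 : q2 a * (r a - r b) = (q2 a * r a + q2 b * r b) - (q2 a + q2 b) * r b by ring.
  by rewrite e1 e2 x1 m1 x2 m2.
have eb : q1 b = q2 b by lra.
by apply: functional_extensionality => w; rewrite p1 p2 ea eb.
Qed.

Lemma coneE_of (R : realFieldType) (Omega : finType) (r pi : Omega -> R) :
  (forall w, 0 <= pi w) -> expect r pi = 0 -> mass pi <= 1 -> cone (Defs.inE r) pi.
Proof.
move=> p0 pe pm.
pose M := \sum_a (if 0 < r a then pi a * r a else 0).
pose Mn := \sum_b (if r b < 0 then pi b * - r b else 0).
have M0 : 0 <= M.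
  by apply: sumr_ge0 => a _; case: ifP => // h; apply: mulr_ge0 => //; exact: ltW.
have eMn : Mn = M.
  have : expect r pi = M - Mn.
    rewrite /expect /M /Mn -sumrB; apply: eq_bigr => w _.
    case: (ltgtP 0 (r w)) => h.
    - by rewrite subr0.
    - by rewrite sub0r mulrN opprK.
    - by rewrite -h mulr0 subr0.
  by rewrite pe => /eqP; rewrite eq_sym subr_eq0 => /eqP.
pose fp a := if 0 < r a then pi a / M else 0.
pose gn b := if r b < 0 then pi b else 0.
pose av (i : (Omega * Omega + Omega)%type) :=
  match i with inl ab => e2 r ab.1 ab.2 | inr z => unitv R z end.
pose l (i : (Omega * Omega + Omega)%type) :=
  match i with inl ab => fp ab.1 * gn ab.2 * (r ab.1 - r ab.2)
             | inr z => if r z == 0 then pi z else 0 end.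
have lE : forall a b, l (inl (a, b)) = fp a * gn b * (r a - r b) by [].
apply: (@cone_fin _ _ _ _ av l).
- case=> [[a b]|z] /=.
  + rewrite /fp /gn; case: ifP => ha; last by rewrite !mul0r eqxx.
    case: ifP => hb; last by rewrite mulr0 mul0r eqxx.
    by move=> _; apply: e2_E.
  + by case: ifP => [/eqP hz _|_]; [apply: unitv_E | rewrite eqxx].
- case=> [[a b]|z] /=.
  + rewrite /fp /gn; case: ifP => ha; last by rewrite !mul0r.
    case: ifP => hb; last by rewrite mulr0 mul0r.
    apply: mulr_ge0; last by lra.
    by apply: mulr_ge0 => //; apply: divr_ge0.
  + by case: ifP.
- pose Ng := \sum_b gn b.
  pose Np := \sum_a (if 0 < r a then pi a else 0).
  pose N0 := \sum_z (if r z == 0 then pi z else 0).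
  have hmass : mass pi = Np + Ng + N0.
    rewrite /mass /Np /Ng /N0 /gn -!big_split /=; apply: eq_bigr => w _.
    case: (ltgtP (r w) 0) => h; rewrite ?addr0 ?add0r //.
  have hfr : \sum_a fp a * r a = M / M.
    rewrite /M mulr_suml; apply: eq_bigr => a _; rewrite /fp.
    by case: ifP => _; rewrite ?mul0r // mulrAC.
  have hf : \sum_a fp a = Np / M.
    rewrite /Np mulr_suml; apply: eq_bigr => a _; rewrite /fp.
    by case: ifP => _; rewrite ?mul0r.
  have hgr : \sum_b gn b * - r b = Mn.
    by apply: eq_bigr => b _; rewrite /gn; case: ifP => _; rewrite ?mul0r.
  have hS : \sum_(p : Omega * Omega) l (inl p) = (M / M) * Ng + Np / M * M.
    rewrite (eq_bigr (fun p : Omega * Omega => fp p.1 * gn p.2 * (r p.1 - r p.2))); last by case.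
    rewrite -hfr -hf -eMn -hgr /Ng -(pair_bigA _ (fun a b => fp a * gn b * (r a - r b))) /=.
    rewrite mulr_suml mulr_suml -big_split /=.
    apply: eq_bigr => a _; rewrite !mulr_sumr -big_split /=; apply: eq_bigr => b _.
    by ring.
  rewrite big_sumType /= hS -/N0.
  have Np0 : 0 <= Np by apply: sumr_ge0 => a _; case: ifP.
  have Ng0 : 0 <= Ng by apply: sumr_ge0 => b _; rewrite /gn; case: ifP.
  apply: le_trans pm; rewrite hmass.
  have [Mz|Mnz] := eqVneq M 0.
    by rewrite Mz !mulr0 !mul0r addr0 add0r lerDr addr_ge0.
  by rewrite divff // mul1r divfK // (addrC Ng).
- move=> w.
  have hprod : forall a b, l (inl (a, b)) * av (inl (a, b)) w =
      fp a * gn b * (- r b * unitv R a w) + fp a * gn b * (r a * unitv R b w).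
    move=> a b /=; rewrite /fp /gn /e2; case: ifP => ha; last by rewrite !(mulr0, mul0r) addr0.
    case: ifP => hb; last by rewrite !(mulr0, mul0r) addr0.
    have : r a - r b != 0 by apply/eqP; lra.
    by move: (pi a / M * pi b) => c hd; field.
  have SX : \sum_a \sum_b fp a * gn b * (- r b * unitv R a w) = fp w * Mn.
    rewrite -(@sum_unitv _ _ (fun a => fp a * Mn) w); apply: eq_bigr => a _; rewrite /Mn !mulr_sumr mulr_suml.
    by apply: eq_bigr => b _; rewrite /gn; case: ifP => _; ring.
  have SY : \sum_a \sum_b fp a * gn b * (r a * unitv R b w) = gn w * (M / M).
    rewrite exchange_big /= -(@sum_unitv _ _ (fun b => gn b * (M / M)) w); apply: eq_bigr => b _; rewrite /M mulr_suml mulr_sumr mulr_suml.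
    by apply: eq_bigr => a _; rewrite /fp; case: ifP => _; ring.
  have SZ : \sum_z l (inr z) * av (inr z) w = if r w == 0 then pi w else 0.
    by rewrite /= sum_unitv.
  rewrite big_sumType SZ.
  rewrite (eq_bigr (fun p : Omega * Omega => l (inl (p.1, p.2)) * av (inl (p.1, p.2)) w)); last by case.
  rewrite -(pair_bigA _ (fun a b => l (inl (a, b)) * av (inl (a, b)) w)) /=.
  under eq_bigr do under eq_bigr do rewrite hprod.
  under eq_bigr do rewrite big_split /=.
  rewrite big_split /= SX SY eMn.
  have hMz : M = 0 -> forall w, r w != 0 -> pi w = 0.
    move=> Mz z hz; case: (ltgtP (r z) 0) hz => h // _.
    + have H1 : forall b, predT b -> 0 <= (if r b < 0 then pi b * - r b else 0).
        by move=> b _; case: ifP => // hb; apply: mulr_ge0 => //; lra.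
      have H2 : \sum_(b | predT b) (if r b < 0 then pi b * - r b else 0) = 0.
        exact: (etrans eMn Mz).
      have := psumr_eq0P H1 H2 (i:=z) isT; rewrite h => /eqP.
      rewrite mulf_eq0 oppr_eq0 => /orP [/eqP //|/eqP]; lra.
    + have H1 : forall b, predT b -> 0 <= (if 0 < r b then pi b * r b else 0).
        by move=> b _; case: ifP => // hb; apply: mulr_ge0 => //; lra.
      have H2 : \sum_(b | predT b) (if 0 < r b then pi b * r b else 0) = 0.
        exact: Mz.
      have := psumr_eq0P H1 H2 (i:=z) isT; rewrite h => /eqP.
      rewrite mulf_eq0 => /orP [/eqP //|/eqP]; lra.
  have [Mz|Mnz] := eqVneq M 0.
    rewrite Mz !mulr0 !add0r mul0r mulr0 add0r; case: eqP => // /eqP hw.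
    by apply: hMz.
  rewrite divff // mulr1 /fp /gn.
  case: (ltgtP (r w) 0) => h.
  - by rewrite mul0r addr0 add0r.
  - by rewrite divfK // addr0 addr0.
  - by rewrite mul0r !add0r.
Qed.

Definition Vs (R : realFieldType) (Omega : finType) (r p : Omega -> R) (s : R) :=
  \sum_w (if - s < r w then p w * (1 + r w / s) else 0).
Arguments Vs {R Omega}.

Lemma split_mass (R : realFieldType) (Omega : finType) (r y : Omega -> R) s :
  mass y + expect r y / s = \sum_w y w * (1 + r w / s).
Proof.
rewrite /mass /expect mulr_suml -big_split; apply: eq_bigr => w _ /=.
by rewrite mulrDr mulr1 mulrA.
Qed.

Lemma LP'_bound (R : realFieldType) (Omega : finType) (r p y : Omega -> R) s :
  0 < s -> (forall w, 0 <= y w) -> (forall w, y w <= p w) -> 0 <= expect r y ->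
  mass y <= Vs r p s.
Proof.
move=> s0 y0 yp ye.
apply: (@le_trans _ _ (mass y + expect r y / s)).
  by rewrite lerDl divr_ge0 // ltW.
rewrite split_mass; apply: ler_sum => w _; case: ifP => h.
- have t0 : 0 < 1 + r w / s.
    have : -1 < r w / s by rewrite ltr_pdivlMr // mulN1r.
    lra.
  by apply: ler_wpM2r => //; exact: ltW.
- have t0 : 1 + r w / s <= 0.
    have : r w / s <= -1 by rewrite ler_pdivrMr // mulN1r leNgt h.
    lra.
  exact: mulr_ge0_le0.
Qed.

Theorem lemma2 (R : realFieldType) (Omega : finType) (r p : Omega -> R) :
  inJ r p ->
  exists v : R, is_max_value (LP_values r p) v /\ is_max_value (LP'_values r p) v.
Proof.
move=> [[p0 p1] hneg].
have [s [s0 [G0 H0]]] := @exists_s _ _ r p p0 hneg.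
pose D := \sum_w (if r w == - s then p w * r w else 0).
have HGD : Hs r p s = Gs r p s + D.
  rewrite /Hs /Gs /D -big_split; apply: eq_bigr => w _ /=.
  by case: (ltgtP (r w) (- s)) => h; rewrite ?addr0 ?add0r.
have Dle : D <= 0 by lra.
pose th := if D == 0 then 0 else Gs r p s / - D.
have th0 : 0 <= th.
  by rewrite /th; case: eqP => // _; apply: divr_ge0 => //; lra.
have th1 : th <= 1.
  rewrite /th; case: eqP => // /eqP Dn.
  have Dlt : 0 < - D by rewrite oppr_gt0 lt_neqAle Dn Dle.
  rewrite ler_pdivrMr // mul1r; lra.
pose x w := if - s < r w then p w else if r w == - s then th * p w else 0.
have xr : expect r x = Gs r p s + th * D.
  rewrite /expect /Gs /D mulr_sumr -big_split; apply: eq_bigr => w _ /=; rewrite /x.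
  by case: (ltgtP (r w) (- s)) => h; rewrite ?mul0r ?mulr0 ?addr0 ?add0r ?mulrA.
have xe : expect r x = 0.
  rewrite xr /th; case: eqP => [Dz|/eqP Dnz].
    by rewrite mul0r addr0; move: HGD; rewrite Dz addr0; lra.
  by move: (Gs r p s) Dnz => g Dnz; field.
have x0 : forall w, 0 <= x w.
  move=> w; rewrite /x; case: ifP => // _; case: ifP => // _; exact: mulr_ge0.
have xp : forall w, x w <= p w.
  move=> w; rewrite /x; case: ifP => // _; case: ifP => // _; exact: ler_piMl.
have xpos : forall w, 0 <= r w -> x w = p w.
  by move=> w hw; rewrite /x ifT //; apply: lt_le_trans hw; rewrite oppr_lt0.
have massx : mass x = Vs r p s.
  rewrite -[mass x]addr0 -(mul0r s^-1) -xe split_mass; apply: eq_bigr => w _; rewrite /x.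
  case: (ltgtP (r w) (- s)) => h; rewrite ?mul0r //.
  by rewrite h mulNr divff ?subrr ?mulr0 // gt_eqF.
have mx1 : mass x <= 1 by rewrite -p1; apply: ler_sum => w _.
have bound : forall v, LP'_values r p v -> v <= mass x.
  move=> v [pi [c [le [e ->]]]]; rewrite massx; apply: LP'_bound s0 _ le e.
  apply: cone_nonneg c => u [z ->] w; rewrite /unitv; by case: eqP.
have x'LP : LP'_values r p (mass x).
  exists x; split; first exact: cone_Omega.
  by split=> //; split=> //; rewrite xe.
exists (mass x); split; split=> //.
- exists x, (fun w => p w - x w); split; first exact: coneE_of.
  split; last by split=> // w; rewrite addrC subrK.
  apply: (@cone_fin _ _ _ Omega (@unitv R Omega) (fun w => p w - x w)).
  + move=> i hi; exists i; split=> //.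
    rewrite ltNge; apply/negP => hr; move: hi; by rewrite xpos // subrr eqxx.
  + by move=> i; rewrite subr_ge0.
  + rewrite -p1; apply: ler_sum => i _; have := x0 i; lra.
  + by move=> w; rewrite sum_unitv.
- by move=> v /(@LP_sub _ _ r p v (conj p0 p1)) /bound.
Qed.
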